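(* Let $P$ be a finite poset and $q$ a prime power. Suppose that $La(n,P)=(1+o(1))\Sigma(n,e(P))$ as $n\to\infty$, and that $e_q(P)=e(P)$. Then $La_q(n,P)=(1+o(1))\Sigma_q(n,e_q(P))$ as $n\to\infty$.
   Context: A family $\mathcal{F}$ of subsets of $[n]$ (resp. of subspaces of $\mathbb{F}_q^n$) weakly contains a poset $P$ if there is an injection $f:P\to\mathcal{F}$ such that $x<_P y$ implies $f(x)\subsetneq f(y)$; otherwise $\mathcal{F}$ is $P$-free. $La(n,P)$ is the maximum size of a $P$-free family $\mathcal{F}\subseteq 2^{[n]}$, and $La_q(n,P)$ the maximum size of a $P$-free family of subspaces of $\mathbb{F}_q^n$. Level $i$ of $2^{[n]}$ is the family of $i$-element subsets; level $i$ of the subspace poset is the set of $i$-dimensional subspaces. $e(P)$ is the largest integer $m$ such that for every $n$, every family in $2^{[n]}$ consisting of $m$ consecutive levels is $P$-free; $e_q(P)$ is the largest integer $m$ such that the middle $m$ levels of the subspace poset of $\mathbb{F}_q^n$ do not contain $P$ for any $n$. $\Sigma(n,k)=\sum_{i=1}^k\binom{n}{\lfloor\frac{n-k}{2}\rfloor+i}$ and $\Sigma_q(n,k)=\sum_{i=1}^k{n \brack \lfloor\frac{n-k}{2}\rfloor+i}_q$, with ${n\brack j}_q$ the Gaussian binomial coefficient (number of $j$-dimensional subspaces of $\mathbb{F}_q^n$). *)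

(* Defs.v *)
From HB Require Import structures.
From mathcomp Require Import all_boot all_order all_algebra.
Set Implicit Arguments. Unset Strict Implicit. Unset Printing Implicit Defensive.
Import Order.TTheory GRing.Theory Num.Theory.

(* ---------- Boolean lattice 2^[n] : subsets of 'I_n ---------- *)

(* Fam weakly contains the poset P: an injection f : P -> Fam with
   x <_P y  ==>  f x strictly contained in f y. *)
Definition weakly_contains_set (d : Order.disp_t) (P : finPOrderType d) (n : nat)
    (Fam : {set {set 'I_n}}) : bool :=
  [exists f : {ffun P -> {set 'I_n}},
     [&& injectiveb f, [forall x, f x \in Fam]
       & [forall x, forall y, (x < y)%O ==> (f x \proper f y)]]].

(* La(n,P): maximum size of a P-free family of subsets of [n]. *)
Definition La (d : Order.disp_t) (P : finPOrderType d) (n : nat) : nat :=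
  \max_(Fam : {set {set 'I_n}} | ~~ weakly_contains_set P Fam) #|Fam|.

(* the union of the m consecutive levels i, i+1, ..., i+m-1 of 2^[n] *)
Definition consec_levels (n i m : nat) : {set {set 'I_n}} :=
  [set A : {set 'I_n} | (i <= #|A| < i + m)%N].

Definition e_prop (d : Order.disp_t) (P : finPOrderType d) (m : nat) : Prop :=
  forall n i, ~~ weakly_contains_set P (consec_levels n i m).

(* "m = e(P)" *)
Definition is_e (d : Order.disp_t) (P : finPOrderType d) (m : nat) : Prop :=
  e_prop P m /\ forall m', e_prop P m' -> (m' <= m)%N.

(* ---------- Subspace lattice of F^n (F a finite field, q = #|F|) ----------
   A subspace of F^n (row vectors) is represented canonically by the square
   matrix A with genmx A == A (i.e. A = <<A>>%MS); its dimension is \rank A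
   and strict inclusion is ltmx (the (_ < _)%MS of mxalgebra). *)
Definition is_subspace (F : finFieldType) (n : nat) (A : 'M[F]_n) : bool :=
  genmx A == A.

Definition weakly_contains_sub (d : Order.disp_t) (P : finPOrderType d)
    (F : finFieldType) (n : nat) (Fam : {set 'M[F]_n}) : bool :=
  [exists f : {ffun P -> 'M[F]_n},
     [&& injectiveb f, [forall x, f x \in Fam]
       & [forall x, forall y, (x < y)%O ==> ltmx (f x) (f y)]]].

(* La_q(n,P) *)
Definition La_q (d : Order.disp_t) (P : finPOrderType d) (F : finFieldType)
    (n : nat) : nat :=
  \max_(Fam : {set 'M[F]_n} |
          (Fam \subset [set A : 'M[F]_n | is_subspace A]) && ~~ weakly_contains_sub P Fam)
     #|Fam|.

(* middle m levels: dimensions floor((n-m)/2)+1, ..., floor((n-m)/2)+m *)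
Definition middle_levels_sub (F : finFieldType) (n m : nat) : {set 'M[F]_n} :=
  [set A : 'M[F]_n | is_subspace A && ((n - m)./2 < \rank A <= (n - m)./2 + m)%N].

Definition eq_prop (d : Order.disp_t) (P : finPOrderType d) (F : finFieldType)
    (m : nat) : Prop :=
  forall n, ~~ weakly_contains_sub P (middle_levels_sub F n m).

(* "m = e_q(P)" with q = #|F| *)
Definition is_eq (d : Order.disp_t) (P : finPOrderType d) (F : finFieldType)
    (m : nat) : Prop :=
  eq_prop P F m /\ forall m', eq_prop P F m' -> (m' <= m)%N.

(* ---------- Sigma, Gaussian binomials ---------- *)

Definition Sigma (n k : nat) : nat :=
  \sum_(1 <= i < k.+1) 'C(n, (n - k)./2 + i).

(* Gaussian binomial [n k]_q via the q-Pascal rule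
   [n+1, k+1] = [n, k] + q^(k+1) [n, k+1], [n,0] = 1, [0,k+1] = 0. *)
Fixpoint gauss (q n k : nat) : nat :=
  if n is n'.+1 then
    (if k is k'.+1 then gauss q n' k' + q ^ k * gauss q n' k else 1)
  else (k == 0%N).

Definition Sigma_q (q n k : nat) : nat :=
  \sum_(1 <= i < k.+1) gauss q n ((n - k)./2 + i).

(* f(n) = (1 + o(1)) g(n) as n -> oo *)
Definition asymp_one (f g : nat -> nat) : Prop :=
  forall eps : rat, (0 < eps)%R -> exists N : nat, forall n : nat, (N <= n)%N ->
    (`|(f n)%:R - (g n)%:R| <= eps * (g n)%:R)%R.

(* Main.v *)
Require Import Defs.
From mathcomp Require Import all_boot all_order all_algebra.
From mathcomp Require Import ring lra zify.
Import Order.TTheory GRing.Theory Num.Theory.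
Set Implicit Arguments. Unset Strict Implicit. Unset Printing Implicit Defensive.


Section Gauss.
Local Open Scope ring_scope.
Variable q : nat.
Hypothesis q2 : (1 < q)%N.
Local Notation qq := (q%:R : rat).

Definition Eq (n k : nat) : rat := \prod_(i < k) (qq ^+ n - qq ^+ i).

Lemma qq_gt1 : 1 < qq. Proof. by rewrite ltr1n. Qed.
Lemma qq_gt0 : 0 < qq. Proof. by rewrite ltr0n; lia. Qed.

Lemma qX_lt i j : (i < j)%N -> qq ^+ i < qq ^+ j.
Proof. by move=> ij; rewrite ltr_eXn2l // qq_gt1. Qed.

Lemma E_succ n k : Eq n.+1 k.+1 = (qq ^+ n.+1 - 1) * qq ^+ k * Eq n k.
Proof.
rewrite /Eq big_ord_recl /= expr0 -mulrA; congr (_ * _).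
have -> : qq ^+ k = \prod_(i < k) qq by rewrite prodr_const card_ord.
rewrite -big_split /=.
by apply: eq_bigr => i _; rewrite !exprS mulrBr.
Qed.

Lemma E_recr n k : Eq n k.+1 = Eq n k * (qq ^+ n - qq ^+ k).
Proof. by rewrite /Eq big_ord_recr. Qed.

Lemma Ekk_neq0 k : Eq k k != 0.
Proof.
rewrite /Eq prodf_seq_neq0; apply/allP => i _ /=.
by rewrite subr_eq0 gt_eqF // qX_lt.
Qed.

Lemma gaussE n k : (gauss q n k)%:R * Eq k k = Eq n k.
Proof.
elim: n k => [|n IH] [|k].
- by rewrite /= /Eq !big_ord0 mulr1.
- by rewrite /= mul0r /Eq big_ord_recl expr0 subrr mul0r.
- by rewrite /= /Eq !big_ord0 mulr1.
rewrite /= natrD natrM natrX mulrDl !E_succ.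
have e1 := IH k; have e2 := IH k.+1.
rewrite [Eq n k.+1]E_recr E_succ in e2.
rewrite [X in X + _](_ : _ = (qq ^+ k.+1 - 1) * qq ^+ k * Eq n k); last first.
  by rewrite -e1; ring.
rewrite [X in _ + X](_ : _ = qq ^+ k.+1 * (Eq n k * (qq ^+ n - qq ^+ k))); last first.
  by rewrite -e2; ring.
rewrite !exprS; ring.
Qed.

Lemma gauss_n0 n : gauss q n 0 = 1%N. Proof. by case: n. Qed.

Lemma gauss_step n k : (k < n)%N ->
  (gauss q n k.+1)%:R * (qq ^+ k.+1 - 1) = (gauss q n k)%:R * (qq ^+ (n - k) - 1).
Proof.
move=> kn.
have e1 := gaussE n k; have e2 := gaussE n k.+1.
rewrite E_succ E_recr -e1 in e2.
have hq : qq ^+ n - qq ^+ k = qq ^+ k * (qq ^+ (n - k) - 1).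
  by rewrite mulrBr mulr1 -exprD subnKC // ltnW.
rewrite hq in e2.
have nz : qq ^+ k * Eq k k != 0.
  by rewrite mulf_neq0 ?Ekk_neq0 // expf_neq0 // gt_eqF // qq_gt0.
apply: (mulIf nz).
rewrite -[LHS]mulrA -[RHS]mulrA.
rewrite [X in _ = _ * X]mulrC -[X in _ = _ * X]mulrA.
rewrite [X in _ * X = _](_ : _ = (qq ^+ k.+1 - 1) * qq ^+ k * Eq k k); last by ring.
by rewrite e2; ring.
Qed.

Definition Qf (x : nat) : rat := \prod_(i < x) (qq ^+ i.+1 - 1).

Lemma Qf_rec x : Qf x.+1 = Qf x * (qq ^+ x.+1 - 1).
Proof. by rewrite /Qf big_ord_recr. Qed.

Lemma gaussQ n k : (k <= n)%N -> (gauss q n k)%:R * Qf k * Qf (n - k) = Qf n.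
Proof.
elim: k => [|k IH] kn.
  by rewrite gauss_n0 subn0 /Qf big_ord0 !mul1r.
have e := gauss_step kn.
rewrite -(IH (ltnW kn)).
have -> : (n - k = (n - k.+1).+1)%N by lia.
rewrite !Qf_rec.
have -> : ((n - k.+1).+1 = n - k)%N by lia.
rewrite (_ : _ * _ * _ = (gauss q n k.+1)%:R * (qq ^+ k.+1 - 1) * Qf k * Qf (n - k.+1)); last by ring.
rewrite e; ring.
Qed.

Definition phi (t : nat) : rat := (qq ^+ t - 1) / t%:R.
Definition Phi (x : nat) : rat := \prod_(i < x) phi i.+1.

Lemma Phi_rec x : Phi x.+1 = Phi x * phi x.+1.
Proof. by rewrite /Phi big_ord_recr. Qed.

Lemma phi_gt0 t : (0 < t)%N -> 0 < phi t.
Proof.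
move=> t0; rewrite /phi divr_gt0 ?ltr0n // subr_gt0.
by rewrite -(expr0 qq) qX_lt.
Qed.

Lemma Phi_gt0 x : 0 < Phi x.
Proof. by rewrite /Phi prodr_gt0 // => i _; rewrite phi_gt0. Qed.

Lemma QfPhi x : Qf x = (x`!)%:R * Phi x.
Proof.
elim: x => [|x IH]; first by rewrite /Qf /Phi !big_ord0 mulr1.
rewrite Qf_rec Phi_rec IH factS natrM /phi.
have nz : (x.+1)%:R != 0 :> rat by rewrite pnatr_eq0.
set y := (_ - 1); set m := x.+1%:R; set f := x`!%:R. field. by rewrite addrC natr1 pnatr_eq0 /=.
Qed.

Lemma phi_le1 t : (0 < t)%N -> phi t <= phi t.+1.
Proof.
move=> t0; rewrite /phi ler_pdivrMr ?ltr0n // mulrAC ler_pdivlMr ?ltr0n //.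
have hx : 1 <= qq ^+ t by rewrite exprn_ege1 // ltW // qq_gt1.
have hq : 2 <= qq by rewrite (ler_nat _ 2 q).
have ht : 1 <= t%:R :> rat by rewrite ler1n.
rewrite exprS -natr1.
set x := qq ^+ t in hx *; set T := t%:R in ht *; clearbody x T.
have h0 : 0 <= (T - 1) * (qq - 2) by apply: mulr_ge0; lra.
have h1 : 1 <= T * (qq - 1) by nra.
have h2 : x <= x * (T * (qq - 1)).
  rewrite -subr_ge0 -[X in _ - X]mulr1 -mulrBr; apply: mulr_ge0; lra.
nra.
Qed.

Lemma phi_mono s t : (0 < s)%N -> (s <= t)%N -> phi s <= phi t.
Proof.
move=> s0; elim: t => [|t IH] st; first by lia.
case: (ltngtP s t.+1) => [lt|gt|->]; last by [].
  apply: le_trans (IH _) (phi_le1 _); lia.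
lia.
Qed.

Lemma PhiMono a b d : (a <= b)%N -> (d <= a)%N ->
  Phi a * Phi b <= Phi (a - d) * Phi (b + d).
Proof.
move=> ab; elim: d => [|d IH] da; first by rewrite subn0 addn0.
apply: le_trans (IH (ltnW da)) _.
have -> : (a - d = (a - d.+1).+1)%N by lia.
rewrite Phi_rec addnS Phi_rec.
rewrite [Phi (a - d.+1) * _ * _]mulrAC [X in _ <= X]mulrA.
rewrite ler_pM2l ?mulr_gt0 ?Phi_gt0 //.
apply: phi_mono; lia.
Qed.

Lemma gaussPhi n k : (k <= n)%N ->
  (gauss q n k)%:R * (Phi k * Phi (n - k)) = ('C(n, k))%:R * Phi n.
Proof.
move=> kn; have e := gaussQ kn.
rewrite !QfPhi in e.
have := bin_fact kn => /(congr1 (fun x => x%:R : rat)); rewrite !natrM => hb.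
rewrite -hb in e.
have nz : (k`!)%:R * ((n - k)`!)%:R != 0 :> rat.
  by rewrite mulf_neq0 // pnatr_eq0 -lt0n fact_gt0.
apply: (mulIf nz); move: e; set K := (k`!)%:R; set L := ((n-k)`!)%:R.
move=> e; rewrite (_ : _ * Phi n * _ = 'C(n, k)%:R * (K * L) * Phi n); last by ring.
rewrite -e; ring.
Qed.

Lemma gauss_cross n j k : (j <= n)%N -> (k <= n)%N ->
  (minn j (n - j) <= minn k (n - k))%N ->
  (gauss q n j)%:R * ('C(n, k))%:R <= (gauss q n k)%:R * ('C(n, j))%:R :> rat.
Proof.
move=> jn kn mjk.
have ej := gaussPhi jn; have ek := gaussPhi kn.
have Xj : 0 < Phi j * Phi (n - j) by rewrite mulr_gt0 ?Phi_gt0.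
have Xk : 0 < Phi k * Phi (n - k) by rewrite mulr_gt0 ?Phi_gt0.
have key : Phi k * Phi (n - k) <= Phi j * Phi (n - j).
  have sym x : (x <= n)%N -> Phi x * Phi (n - x) =
      Phi (minn x (n - x)) * Phi (n - minn x (n - x)).
    move=> xn; case: (leqP x (n - x)) => h.
      by [].
    by rewrite subKn // mulrC.
  rewrite (sym _ kn) (sym _ jn).
  set a := minn k (n - k); set a' := minn j (n - j).
  have ha : (a <= n - a)%N by rewrite /a; lia.
  have := PhiMono (d := a - a') ha (leq_subr _ _).
  have -> : (a - (a - a') = a')%N by lia.
  have -> : (n - a + (a - a') = n - a')%N by rewrite /a /a'; lia.
  by [].
have hC := Phi_gt0 n.
rewrite -(ler_pM2r Xj) -(ler_pM2r Xk).
rewrite (_ : _ * _ * _ * _ = ('C(n, k))%:R * ((gauss q n j)%:R * (Phi j * Phi (n - j))) * (Phi k * Phi (n - k))); last by ring.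
rewrite ej.
rewrite (_ : (gauss q n k)%:R * _ * _ * _ = ('C(n, j))%:R * ((gauss q n k)%:R * (Phi k * Phi (n - k))) * (Phi j * Phi (n - j))); last by ring.
rewrite ek.
rewrite (_ : _ * _ * _ = ('C(n, k))%:R * ('C(n, j))%:R * Phi n * (Phi k * Phi (n - k))); last by ring.
rewrite (_ : ('C(n, j))%:R * _ * _ = ('C(n, k))%:R * ('C(n, j))%:R * Phi n * (Phi j * Phi (n - j))); last by ring.
by rewrite ler_wpM2l // !mulr_ge0 // ltW.
Qed.

End Gauss.


Section LP.
Local Open Scope ring_scope.
Variables (q n m : nat).
Hypothesis q2 : (1 < q)%N.
Hypothesis mn : (m <= n)%N.
Local Notation h := ((n - m)./2).
Definition inM (k : nat) : bool := (h < k <= h + m)%N.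
Local Notation G k := ((gauss q n k)%:R : rat).
Local Notation C k := (('C(n, k))%:R : rat).

Lemma half_facts : (h + h <= n - m <= h + h + 1)%N.
Proof.
have := odd_double_half (n - m); rewrite -addnn.
by case: (odd _) => /= <-; lia.
Qed.

Lemma G_gt0 k : (k <= n)%N -> 0 < G k.
Proof.
move=> kn; have := gaussPhi q2 kn.
have hp := Phi_gt0 q2; move=> e.
have hC : 0 < C k by rewrite ltr0n bin_gt0.
have : 0 < G k * (Phi q k * Phi q (n - k)) by rewrite e mulr_gt0.
by rewrite pmulr_lgt0 // mulr_gt0.
Qed.

Lemma C_gt0 k : (k <= n)%N -> 0 < C k.
Proof. by move=> kn; rewrite ltr0n bin_gt0. Qed.

Lemma LP_bound (a : nat -> nat) (eps : rat) : 0 <= eps ->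
  (forall k, (k <= n)%N -> (a k <= gauss q n k)%N) ->
  \sum_(k < n.+1) (a k)%:R * C k / G k <= (1 + eps) * \sum_(k < n.+1 | inM k) C k ->
  \sum_(k < n.+1) (a k)%:R <= (1 + eps) * \sum_(k < n.+1 | inM k) G k.
Proof.
move=> e0 aG hyp.
have [hf1 hf2] := andP half_facts.
have hn : (h <= n)%N by lia.
pose R := G h / C h.
have R0 : 0 <= R by rewrite divr_ge0 // ltW ?G_gt0 ?C_gt0.
have inMle k : (k <= n)%N -> inM k -> R * C k <= G k.
  move=> kn km; rewrite /R mulrAC ler_pdivrMr ?C_gt0 //.
  apply: gauss_cross => //; rewrite /inM in km; lia.
have outle k : (k <= n)%N -> ~~ inM k -> G k <= R * C k.
  move=> kn km; rewrite /R mulrAC ler_pdivlMr ?C_gt0 //.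
  apply: gauss_cross => //; rewrite /inM in km; lia.
have point (k : 'I_n.+1) : (a k)%:R <= R * ((a k)%:R * C k / G k) +
    (if inM k then G k - R * C k else 0).
  have kn : (k <= n)%N by rewrite -ltnS ltn_ord.
  have Gp := G_gt0 kn; have Cp := C_gt0 kn.
  have aG' : (a k)%:R <= G k by rewrite ler_nat aG.
  have eq1 : R * ((a k)%:R * C k / G k) = (a k)%:R * (R * C k / G k).
    by rewrite mulrA mulrCA !mulrA.
  rewrite eq1.
  case: ifP => km.
    have h1 : R * C k / G k <= 1 by rewrite ler_pdivrMr // mul1r inMle.
    have h2 : 0 <= R * C k / G k by apply: divr_ge0; [apply: mulr_ge0 => //; apply: ltW|apply: ltW].
    have -> : G k - R * C k = G k * (1 - R * C k / G k).
      by rewrite mulrBr mulr1 mulrCA divff ?mulr1 // gt_eqF.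
    have : 0 <= (G k - (a k)%:R) * (1 - R * C k / G k) by apply: mulr_ge0; lra.
    nra.
  have h1 : 1 <= R * C k / G k by rewrite ler_pdivlMr // mul1r outle ?km.
  rewrite addr0; have : 0 <= (a k)%:R :> rat by [].
  nra.
apply: le_trans (ler_sum _ (fun k _ => point k)) _.
rewrite big_split /= -mulr_sumr.
rewrite -big_mkcond /= sumrB -mulr_sumr.
have hS : R * \sum_(k < n.+1 | inM k) C k <= \sum_(k < n.+1 | inM k) G k.
  rewrite mulr_sumr; apply: ler_sum => k km; apply: inMle => //; by rewrite -ltnS.
have hS0 : 0 <= \sum_(k < n.+1 | inM k) C k by apply: sumr_ge0 => k _; rewrite ler0n.
have := ler_wpM2l R0 hyp.
set X := \sum_(k < n.+1 | inM k) C k in hS hS0 *.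
set Y := \sum_(k < n.+1 | inM k) G k in hS *.
set Z := \sum_(i < n.+1) _.
move=> hz.
have : R * ((1 + eps) * X) = R * X + eps * (R * X) by ring.
have : eps * (R * X) <= eps * Y by rewrite ler_wpM2l.
nra.
Qed.
End LP.


Section LA1.
Variable F : finFieldType.
Local Open Scope ring_scope.

Lemma card_fr n k : (k <= n)%N ->
  #|[pred A : 'M[F]_(k, n) | \rank A == k]| = (\prod_(i < k) (#|F| ^ n - #|F| ^ i))%N.
Proof.
set p := #|F|.
pose fr m := [pred A : 'M[F]_(m, n) | \rank A == m].
rewrite -/(fr k).
elim: k => [_ | m IHm /ltnW-le_mn].
  rewrite big_ord0 (@eq_card1 _ (0%R : 'M_(0, n))) //= => A.
  by rewrite flatmx0 !inE mxrank.unlock !eqxx.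
rewrite big_ord_recr /= -{}IHm //.
rewrite -sum_nat_const /= -sum1_card -add1n.
rewrite (partition_big dsubmx (fr m)) /= => [|A]; last first.
  rewrite !inE -{1}(vsubmxK A); move: {A}(_ A) (_ A) => Ad Au Afull.
  rewrite eqn_leq rank_leq_row -(leq_add2l (\rank Au)) -mxrank_sum_cap.
  rewrite {1 3}[@mxrank]lock addsmxE (eqnP Afull) -lock -addnA.
  by rewrite leq_add ?rank_leq_row ?leq_addr.
apply: eq_bigr => A rAm; rewrite (reindex (col_mx^~ A)) /=; last first.
  exists usubmx => [v _ | vA]; first by rewrite col_mxKu.
  by case/andP=> _ /eqP <-; rewrite vsubmxK.
transitivity #|~: [set v *m A | v in 'rV_m]|; last first.
  rewrite cardsCs setCK card_imset ?card_mx ?card_ord ?mul1n //.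
  have [B AB1] := row_freeP rAm; apply: can_inj (mulmx^~ B) _ => v.
  by rewrite -mulmxA AB1 mulmx1.
rewrite -sum1_card; apply: eq_bigl => v; rewrite !inE col_mxKd eqxx.
rewrite andbT eqn_leq rank_leq_row /= -(leq_add2r (\rank (v :&: A)%MS)).
rewrite -addsmxE mxrank_sum_cap (eqnP rAm) addnAC leq_add2r.
rewrite (ltn_leqif (mxrank_leqif_sup _)) ?capmxSl // sub_capmx submx_refl.
by congr (~~ _); apply/submxP/imsetP=> [] [u]; exists u.
Qed.
End LA1.


Section LA2.
Variable F : finFieldType.
Variable n : nat.
Local Open Scope ring_scope.

Lemma trans_sub (A A' : 'M[F]_n) : \rank A = \rank A' ->
  exists2 M, M \in unitmx & (A *m M == A')%MS.
Proof.
move=> rA.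
have eA (B : 'M[F]_n) : (B :=: (pid_mx (\rank B) : 'M_n) *m row_ebase B)%MS.
  rewrite -{1}(mulmx_ebase B) -mulmxA.
  apply: eqmxMfull.
  by rewrite row_full_unit col_ebase_unit.
exists (invmx (row_ebase A) *m row_ebase A').
  by rewrite unitmx_mul unitmx_inv !row_ebase_unit.
apply/eqmxP.
apply: eqmx_trans (eqmxMr _ (eA A)) _.
rewrite !mulmxA mulmxK ?row_ebase_unit // rA.
exact: eqmx_sym (eA A').
Qed.

Definition subsp (A : 'M[F]_n) := genmx A == A.

Lemma fiber_le (T : finType) (p : pred T) r (g : T -> 'M[F]_(r, n))
    (act : T -> 'M[F]_n -> T) :
  (forall x M, M \in unitmx -> p x -> p (act x M)) ->
  (forall x M, M \in unitmx -> (g (act x M) == g x *m M)%MS) ->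
  (forall M, M \in unitmx -> injective (act^~ M)) ->
  forall A A', subsp A -> subsp A' -> \rank A = \rank A' ->
  (#|[set x | p x && (genmx (g x) == A)]| <= #|[set x | p x && (genmx (g x) == A')]|)%N.
Proof.
move=> pact gact inj A A' sA sA' rA.
have [M Mu AM] := trans_sub rA.
rewrite -(card_imset _ (inj M Mu)); apply: subset_leq_card.
apply/subsetP => _ /imsetP[x + ->]; rewrite !inE => /andP[px /eqP gx].
rewrite pact //=; rewrite -(eqP sA').
apply/eqP/eq_genmx.
apply: eqmx_trans (eqmxP (gact x M Mu)) _.
apply: eqmx_trans (eqmxMr _ (eqmx_sym (genmxE (g x)))) _.
rewrite gx; exact/eqmxP.
Qed.

Lemma fiber_eq (T : finType) (p : pred T) r (g : T -> 'M[F]_(r, n))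
    (act : T -> 'M[F]_n -> T) :
  (forall x M, M \in unitmx -> p x -> p (act x M)) ->
  (forall x M, M \in unitmx -> (g (act x M) == g x *m M)%MS) ->
  (forall M, M \in unitmx -> injective (act^~ M)) ->
  forall A A', subsp A -> subsp A' -> \rank A = \rank A' ->
  #|[set x | p x && (genmx (g x) == A)]| = #|[set x | p x && (genmx (g x) == A')]|.
Proof.
move=> h1 h2 h3 A A' sA sA' rA; apply/eqP; rewrite eqn_leq.
by rewrite !(fiber_le h1 h2 h3).
Qed.

(* diagonal selection matrices *)
Definition Dm (S : {set 'I_n}) : 'M[F]_n := diag_mx (\row_i (i \in S)%:R).

Lemma DmM (S T : {set 'I_n}) : Dm S *m Dm T = Dm (S :&: T).
Proof.
apply/matrixP => i j; rewrite mul_diag_mx !mxE in_setI.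
by case: (i \in S); case: (i \in T); case: (i == j); rewrite ?mulr0 ?mul0r ?mul1r ?mulr1n ?mulr0n.
Qed.

Lemma Dm0 : Dm set0 = 0.
Proof. by apply/matrixP => i j; rewrite !mxE in_set0 mul0rn. Qed.

Lemma Dm_eq0 (S : {set 'I_n}) : Dm S = 0 -> S = set0.
Proof.
move=> /matrixP D0; apply/setP => i; rewrite in_set0.
have := D0 i i; rewrite !mxE eqxx mulr1n.
by case: (i \in S) => //= /eqP; rewrite oner_eq0.
Qed.

Lemma Dm_sub (S T : {set 'I_n}) : (Dm S <= Dm T)%MS = (S \subset T).
Proof.
apply/idP/idP => [/submxP[X eX] | sST].
  have : Dm S *m Dm (~: T) = 0 by rewrite eX -mulmxA DmM setICr Dm0 mulmx0.
  by rewrite DmM => /Dm_eq0 /eqP; rewrite -setDE setD_eq0.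
by rewrite -(setIidPl sST) -DmM submxMl.
Qed.

Lemma rank_Dm_ge (S : {set 'I_n}) : (#|S| <= \rank (Dm S))%N.
Proof.
pose f := @enum_val _ (mem S).
pose E : 'M[F]_(#|S|, n) := rowsub f 1%:M.
pose E' : 'M[F]_(n, #|S|) := colsub f 1%:M.
have e1 : E *m Dm S *m E' = 1%:M.
  rewrite /E /E' mul_rowsub_mx mul1mx mulmx_colsub mulmx1.
  apply/matrixP => i j; rewrite !mxE.
  have fi : f i \in S by apply: enum_valP.
  rewrite fi (inj_eq enum_val_inj); by [].
have := mxrank1 F #|S|; rewrite -e1 => <-.
apply: leq_trans (mxrankM_maxl _ _) _.
exact: mxrankM_maxr.
Qed.

Lemma rank_Dm (S : {set 'I_n}) : \rank (Dm S) = #|S|.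
Proof.
apply/eqP; rewrite eqn_leq rank_Dm_ge andbT.
have h1 := rank_Dm_ge (~: S).
have : (Dm (~: S) <= kermx (Dm S))%MS.
  by rewrite sub_kermx DmM setIC setICr Dm0.
move/mxrankS; rewrite mxrank_ker => h2.
have h3 := cardsC S; rewrite card_ord in h3.
have h4 := rank_leq_row (Dm S).
move: h1 h2 h3 h4; move: (#|S|) (#|~: S|) (\rank (Dm S)) (\rank (Dm (~: S))) => a b c d.
lia.
Qed.


Lemma card_le_inj (T U : finType) (A : {set T}) (B : {set U}) (f : T -> U) :
  {in A &, injective f} -> (forall x, x \in A -> f x \in B) -> (#|A| <= #|B|)%N.
Proof.
move=> inj fAB; rewrite -(card_in_imset inj); apply: subset_leq_card.
by apply/subsetP => _ /imsetP[x xA ->]; apply: fAB.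
Qed.

Definition Lv k := #|[set A : 'M[F]_n | subsp A && (\rank A == k)]|.

Lemma subsp_gen r (X : 'M[F]_(r, n)) : subsp (genmx X).
Proof. by rewrite /subsp genmx_id. Qed.

Lemma fr_fiber k (A : 'M[F]_n) : subsp A -> \rank A = k ->
  #|[set X : 'M[F]_(k, n) | \rank X == k]| =
  (Lv k * #|[set X : 'M[F]_(k, n) | (\rank X == k) && (genmx X == A)]|)%N.
Proof.
move=> sA rA.
have feq := @fiber_eq _ (fun X : 'M[F]_(k, n) => \rank X == k) _ id (fun X M => X *m M).
have h1 : forall (X : 'M[F]_(k, n)) M, M \in unitmx -> \rank X == k -> \rank (X *m M) == k.
  by move=> X M Mu; rewrite mxrankMfree // row_free_unit.
have h2 : forall (X : 'M[F]_(k, n)) M, M \in unitmx -> (X *m M == X *m M)%MS.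
  by move=> X M _; rewrite /= !submx_refl.
have h3 : forall M, M \in unitmx -> injective (fun X : 'M[F]_(k, n) => X *m M).
  by move=> M Mu; apply: can_inj (mulmx^~ (invmx M)) _ => X; rewrite mulmxK.
rewrite -sum1_card (partition_big (fun X => genmx X) (fun A => subsp A && (\rank A == k))) /=;
  last first.
  by move=> X; rewrite inE => rX; rewrite subsp_gen mxrank_gen.
rewrite /Lv -sum1_card big_distrl /= [in RHS]big_mkcond [in LHS]big_mkcond /=.
apply: eq_bigr => B _; rewrite inE.
case sB: (subsp B && (\rank B == k)) => //.
case/andP: sB => sB /eqP rB.
rewrite mul1n -(feq h1 h2 h3 B A) //; last by rewrite rB rA.
rewrite -sum1_card; apply: eq_bigl => X; by rewrite !inE.
Qed.

Lemma fiber_pid k : (k <= n)%N ->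
  #|[set X : 'M[F]_(k, n) | (\rank X == k) && (genmx X == genmx (pid_mx k : 'M_(k, n)))]| =
  #|[set Y : 'M[F]_k | \rank Y == k]|.
Proof.
move=> kn.
pose P1 : 'M[F]_(n, k) := pid_mx k.
pose P2 : 'M[F]_(k, n) := pid_mx k.
have P21 : P2 *m P1 = 1%:M by rewrite /P1 /P2 pid_mx_id // pid_mx_1.
have back (X : 'M[F]_(k, n)) : (X <= P2)%MS -> X *m P1 *m P2 = X.
  case/submxP => D ->; by rewrite -!mulmxA [P2 *m (P1 *m P2)]mulmxA P21 mul1mx.
apply/eqP; rewrite eqn_leq; apply/andP; split.
  apply: (@card_le_inj _ _ _ _ (fun X => X *m P1)).
    move=> X1 X2; rewrite !inE => /andP[_ /eqP g1] /andP[_ /eqP g2] e.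
    have s1 : (X1 <= P2)%MS by rewrite -genmxE g1 genmxE.
    have s2 : (X2 <= P2)%MS by rewrite -genmxE g2 genmxE.
    by rewrite -(back _ s1) e back.
  move=> X; rewrite !inE => /andP[/eqP rX /eqP g1].
  have s1 : (X <= P2)%MS by rewrite -genmxE g1 genmxE.
  rewrite eqn_leq rank_leq_row /=.
  by rewrite -{1}rX -{1}(back _ s1) mxrankM_maxl.
apply: (@card_le_inj _ _ _ _ (fun Y => Y *m P2)).
  move=> Y1 Y2 _ _ e.
  by rewrite -(mulmx1 Y1) -(mulmx1 Y2) -P21 !mulmxA e.
move=> Y; rewrite !inE => /eqP rY.
have Yf : row_full Y by rewrite /row_full rY.
have e := eqmxMfull P2 Yf.
rewrite (eq_genmx e) eqxx andbT.
by rewrite e /P2 rank_pid_mx.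
Qed.

Lemma Lv_count k : (k <= n)%N ->
  (Lv k * \prod_(i < k) (#|F| ^ k - #|F| ^ i) = \prod_(i < k) (#|F| ^ n - #|F| ^ i))%N.
Proof.
move=> kn.
pose A0 : 'M[F]_n := genmx (pid_mx k : 'M_(k, n)).
have sA : subsp A0 by apply: subsp_gen.
have rA : \rank A0 = k by rewrite mxrank_gen rank_pid_mx.
have := fr_fiber sA rA; rewrite fiber_pid //.
rewrite -(card_fr F (leqnn k)) -(card_fr F kn).
have c1 r : #|[set X : 'M[F]_(k, r) | \rank X == k]| = #|[pred X : 'M[F]_(k, r) | \rank X == k]|.
  by apply: eq_card => X; rewrite inE.
by rewrite !c1 mulnC => ->.
Qed.

End LA2.


Section LA3.
Variable F : finFieldType.
Variable n : nat.
Local Open Scope ring_scope.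

Local Notation T := ('M[F]_n * {set 'I_n})%type.
Definition pN (x : T) := x.1 \in unitmx.
Definition gN (x : T) : 'M[F]_n := Dm F x.2 *m x.1.
Definition NA (A : 'M[F]_n) := #|[set x : T | pN x && (genmx (gN x) == A)]|.
Definition GLc := #|[set B : 'M[F]_n | B \in unitmx]|.

Lemma NA_eq A A' : subsp A -> subsp A' -> \rank A = \rank A' -> NA A = NA A'.
Proof.
apply: (@fiber_eq F n T pN n gN (fun x M => (x.1 *m M, x.2))).
- by move=> x M Mu; rewrite /pN /= unitmx_mul Mu andbT.
- by move=> x M _; rewrite /gN /= mulmxA !submx_refl.
- move=> M Mu [B1 S1] [B2 S2] /= [e1 ->].
  by rewrite -(mulmxK Mu B1) e1 mulmxK.
Qed.

Lemma rank_gN x : pN x -> \rank (genmx (gN x)) = #|x.2|.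
Proof. by move=> u; rewrite mxrank_gen /gN mxrankMfree ?rank_Dm // row_free_unit. Qed.

Lemma NA_level A : subsp A ->
  (NA A * Lv F n (\rank A) = GLc * 'C(n, \rank A))%N.
Proof.
move=> sA; set k := \rank A.
have e1 : #|[set x : T | pN x && (#|x.2| == k)]| = (GLc * 'C(n, k))%N.
  have -> : [set x : T | pN x && (#|x.2| == k)] =
      setX [set B : 'M[F]_n | B \in unitmx] [set S : {set 'I_n} | #|S| == k].
    by apply/setP => -[B S]; rewrite !inE.
  by rewrite cardsX card_draws card_ord.
rewrite -e1 -sum1_card.
rewrite (partition_big (fun x => genmx (gN x)) (fun A' => subsp A' && (\rank A' == k))) /=;
  last first.
  by move=> x; rewrite inE => /andP[u /eqP sx]; rewrite subsp_gen rank_gN //=; apply/eqP.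
rewrite /Lv -sum1_card big_distrr /= [in RHS]big_mkcond [in LHS]big_mkcond /=.
apply: eq_bigr => B _; rewrite inE.
case sB: (subsp B && (\rank B == k)) => //.
case/andP: sB => sB /eqP rB.
rewrite muln1 (@NA_eq A B) //.
rewrite /NA -sum1_card; apply: eq_bigl => x; rewrite !inE.
case u: (pN x) => //=; case g: (genmx (gN x) == B); rewrite ?andbT ?andbF //.
symmetry; apply/eqP; rewrite -(rank_gN u) (eqP g); exact: rB.
Qed.

Lemma Dm_mul_inj (B : 'M[F]_n) (S S' : {set 'I_n}) : B \in unitmx ->
  genmx (Dm F S *m B) = genmx (Dm F S' *m B) -> S = S'.
Proof.
move=> u /genmxP /andP[s1 s2].
have h (X Y : {set 'I_n}) : (Dm F X *m B <= Dm F Y *m B)%MS -> X \subset Y.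
  move=> /(submxMr (invmx B)); rewrite !mulmxK // Dm_sub; by [].
by apply/eqP; rewrite eqEsubset !h.
Qed.

Lemma pre_free (d : Order.disp_t) (P : finPOrderType d) (Fam : {set 'M[F]_n}) (B : 'M[F]_n) :
  B \in unitmx -> ~~ weakly_contains_sub P Fam ->
  ~~ weakly_contains_set P [set S | genmx (Dm F S *m B) \in Fam].
Proof.
move=> u; apply: contra => /existsP[f /and3P[finj fin ford]].
apply/existsP; exists [ffun x => genmx (Dm F (f x) *m B)].
apply/and3P; split.
- apply/injectiveP => x y; rewrite !ffunE => /(Dm_mul_inj u) e.
  exact: (injectiveP _ finj).
- apply/forallP => x; rewrite ffunE.
  by have := forallP fin x; rewrite inE.
apply/forallP => x; apply/forallP => y; apply/implyP => xy.
have := implyP (forallP (forallP ford x) y) xy => pr.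
rewrite !ffunE ltmxErank !genmxE.
rewrite submxMr ?Dm_sub ?proper_sub //=.
by rewrite !mxrankMfree ?row_free_unit // !rank_Dm proper_card.
Qed.

Lemma avg (d : Order.disp_t) (P : finPOrderType d) (Fam : {set 'M[F]_n}) :
  ~~ weakly_contains_sub P Fam ->
  (\sum_(A in Fam) NA A <= GLc * La P n)%N.
Proof.
move=> free.
have e : (\sum_(A in Fam) NA A =
    \sum_(x : T | pN x && (genmx (gN x) \in Fam)) 1)%N.
  symmetry; rewrite (partition_big (fun x => genmx (gN x)) (fun A => A \in Fam)) /=; last first.
    by move=> x /andP[].
  apply: eq_bigr => A AF; rewrite /NA -sum1_card; apply: eq_bigl => x.
  rewrite inE; case: (pN x) => //=; case: eqP => [->|_]; rewrite ?AF ?andbF //.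
rewrite e.
have e2 : (\sum_(x : T | pN x && (genmx (gN x) \in Fam)) 1 =
    \sum_(B : 'M[F]_n) \sum_(S : {set 'I_n})
       (if pN (B, S) && (genmx (gN (B, S)) \in Fam) then 1 else 0))%N.
  by rewrite pair_big /= big_mkcond; apply: eq_bigr => -[B S] _.
rewrite e2.
apply: (@leq_trans (\sum_(B : 'M[F]_n) (if B \in unitmx then La P n else 0))%N).
  apply: leq_sum => B _.
  case u: (B \in unitmx); last first.
    by rewrite big1 // => S _; rewrite /pN /= u.
  have -> : (\sum_(S : {set 'I_n}) (if pN (B, S) && (genmx (gN (B, S)) \in Fam) then 1 else 0) =
      #|[set S : {set 'I_n} | genmx (Dm F S *m B) \in Fam]|)%N.
    rewrite -sum1_card [RHS]big_mkcond /=; apply: eq_bigr => S _.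
    by rewrite inE /pN /gN /= u.
  by apply: leq_bigmax_cond; apply: pre_free.
rewrite -big_mkcond /= sum_nat_const /GLc.
by rewrite leq_mul2r; apply/orP; right; rewrite cardsE.
Qed.

End LA3.


Section Fin.
Variable F : finFieldType.
Variable n : nat.
Local Open Scope ring_scope.
Local Notation q := #|F|.

Lemma q2 : (1 < q)%N. Proof. exact: card_finNzRing_gt1. Qed.

Lemma Lv_gauss k : (k <= n)%N -> Lv F n k = gauss q n k.
Proof.
move=> kn.
have h := congr1 (fun x => x%:R : rat) (Lv_count F kn).
rewrite /= !natrM !natr_prod in h.
have ex r i : (i < k)%N -> (k <= r)%N ->
    ((q ^ r - q ^ i)%N%:R : rat) = (q%:R ^+ r - q%:R ^+ i).
  move=> ik kr; have q0 : (0 < q)%N by have := q2; lia.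
  rewrite natrB ?natrX // leq_pexp2l //; lia.
rewrite (eq_bigr (fun i : 'I_k => (q%:R ^+ k - q%:R ^+ i : rat))) in h; last first.
  by move=> i _; rewrite ex.
rewrite [in RHS](eq_bigr (fun i : 'I_k => (q%:R ^+ n - q%:R ^+ i : rat))) in h; last first.
  by move=> i _; rewrite ex.
have g := @gaussE q n k.
rewrite /Eq in g; rewrite -g in h.
apply/eqP; rewrite -(eqr_nat rat); apply/eqP.
by apply: (mulIf (@Ekk_neq0 q q2 k)).
Qed.

Lemma card_by_rank (X : {set 'M[F]_n}) :
  #|X| = (\sum_(k < n.+1) #|[set A in X | \rank A == k]|)%N.
Proof.
rewrite -sum1_card (partition_big (fun A => inord (\rank A) : 'I_n.+1) xpredT) //=.
apply: eq_bigr => k _; rewrite -sum1_card; apply: eq_bigl => A.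
by rewrite !inE -val_eqE /= inordK // ltnS rank_leq_row.
Qed.

Lemma sum_by_rank (X : {set 'M[F]_n}) (w : nat -> rat) :
  \sum_(A in X) w (\rank A) =
  \sum_(k < n.+1) (#|[set A in X | \rank A == k]|)%:R * w k.
Proof.
rewrite (partition_big (fun A => inord (\rank A) : 'I_n.+1) xpredT) //=.
apply: eq_bigr => k _.
rewrite (eq_bigr (fun=> w k)); last first.
  move=> A /andP[_ /eqP <-]; by rewrite inordK // ltnS rank_leq_row.
have -> : \sum_(A in X | inord (\rank A) == k) w k =
    (\sum_(A in X | inord (\rank A) == k) 1%N)%:R * w k.
  by rewrite natr_sum mulr_suml; apply: eq_bigr => A _; rewrite mul1r.
congr (_%:R * _); rewrite sum1_card; apply: eq_card => A.
by rewrite {1}unfold_in /= !inE -val_eqE /= inordK // ltnS rank_leq_row.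
Qed.

Lemma GLc_gt0 : (0 < GLc F n)%N.
Proof. by apply/card_gt0P; exists 1%:M; rewrite inE unitmx1. Qed.

Lemma weight (d : Order.disp_t) (P : finPOrderType d) (Fam : {set 'M[F]_n}) :
  Fam \subset [set A : 'M[F]_n | is_subspace A] -> ~~ weakly_contains_sub P Fam ->
  \sum_(k < n.+1) (#|[set A in Fam | \rank A == k]|)%:R * ('C(n, k))%:R / (gauss q n k)%:R
    <= (La P n)%:R :> rat.
Proof.
move=> sub free.
have hA A : A \in Fam -> (NA A)%:R = (GLc F n)%:R * ('C(n, \rank A))%:R / (gauss q n (\rank A))%:R :> rat.
  move=> AF; have sA : subsp A by have := subsetP sub A AF; rewrite inE.
  have := NA_level sA; rewrite Lv_gauss ?rank_leq_row // => e.
  have Gp := @G_gt0 q n q2 (\rank A) (rank_leq_row A).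
  apply: (mulIf (lt0r_neq0 Gp)); rewrite divfK ?lt0r_neq0 // -!natrM e.
  by [].
have av := avg free; rewrite -(ler_nat rat) natr_sum natrM in av.
rewrite (eq_bigr _ hA) in av.
rewrite (sum_by_rank Fam (fun k => (GLc F n)%:R * ('C(n, k))%:R / (gauss q n k)%:R)) in av.
have GL0 : 0 < (GLc F n)%:R :> rat by rewrite ltr0n GLc_gt0.
rewrite -(ler_pM2l GL0) mulr_sumr.
apply: le_trans av; rewrite le_eqVlt; apply/orP; left; apply/eqP.
by apply: eq_bigr => k _; rewrite !mulrA [_ * #|_|%:R]mulrC.
Qed.

Lemma card_middle m : (m <= n)%N ->
  #|middle_levels_sub F n m| = (\sum_(k < n.+1 | inM n m k) gauss q n k)%N.
Proof.
move=> mn; rewrite card_by_rank [RHS]big_mkcond /=; apply: eq_bigr => k _.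
case: ifP => hk.
  rewrite -Lv_gauss; last by rewrite -ltnS.
  rewrite /Lv /middle_levels_sub; apply: eq_card => A; rewrite !inE.
  rewrite /is_subspace /subsp.
  case: (\rank A =P k) => [->|_]; last by rewrite !andbF.
  by rewrite /inM in hk; case/andP: hk => -> ->; rewrite !andbT.
apply/eqP; rewrite cards_eq0; apply/eqP/setP => A.
rewrite /middle_levels_sub !inE.
case: (\rank A =P k) => [->|_]; last by rewrite !andbF.
rewrite /inM in hk; move: hk; case: (_ < _)%N; case: (_ <= _)%N => //=; by rewrite !andbF.
Qed.
End Fin.


Lemma window (f : nat -> nat) h m N : (h + m <= N)%N ->
  (\sum_(1 <= i < m.+1) f (h + i) = \sum_(k < N.+1 | h < k <= h + m) f k)%N.
Proof.
move=> hmN.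
set P := (fun k => h < k <= h + m)%N.
rewrite -(big_mkord P f).
have l1 : (h.+1 <= N.+1)%N by lia.
have l2 : (h.+1 <= (h + m).+1)%N by lia.
have l3 : ((h + m).+1 <= N.+1)%N by lia.
rewrite (@big_cat_nat _ _ addn h.+1 0 N.+1 P f (leq0n _) l1).
rewrite (@big_cat_nat _ _ addn (h + m).+1 h.+1 N.+1 P f l2 l3).
have z1 : (\sum_(0 <= i < h.+1 | P i) f i = 0)%N.
  by rewrite big_nat_cond big_pred0 // => k; rewrite /P; lia.
have z2 : (\sum_((h + m).+1 <= i < N.+1 | P i) f i = 0)%N.
  by rewrite big_nat_cond big_pred0 // => k; rewrite /P; lia.
rewrite z1 z2.
rewrite /= add0n addn0.
have e3 : (\sum_(h.+1 <= i < (h + m).+1 | P i) f i = \sum_(h.+1 <= i < (h + m).+1) f i)%N.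
  rewrite big_nat_cond [X in _ = X]big_nat_cond; apply: eq_bigl => k; rewrite /P; lia.
rewrite e3.
rewrite -[h.+1]add1n (_ : ((h + m).+1 = m.+1 + h)%N); last by lia.
rewrite big_addn (_ : (m.+1 + h - h = m.+1)%N); last by lia.
by apply: eq_bigr => k _; rewrite addnC.
Qed.


Theorem corollary1p5 (d : Order.disp_t) (P : finPOrderType d)
    (F : finFieldType) (m : nat) :
  is_e P m -> is_eq P F m ->
  asymp_one (fun n => La P n) (fun n => Sigma n m) ->
  asymp_one (fun n => La_q P F n) (fun n => Sigma_q #|F| n m).
Proof.
Local Open Scope ring_scope.
move=> _ [mfree _] hLa eps eps0.
have [N HN] := hLa eps eps0.
exists (maxn N m) => n nN.
have Nn : (N <= n)%N by apply: leq_trans nN; apply: leq_maxl.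
have mn : (m <= n)%N by apply: leq_trans nN; apply: leq_maxr.
have qq2 := q2 F.
have hm : ((n - m)./2 + m <= n)%N.
  have := odd_double_half (n - m); rewrite -addnn.
  by case: (odd _) => /= <-; lia.
have eSq : Sigma_q #|F| n m = (\sum_(k < n.+1 | inM n m k) gauss #|F| n k)%N.
  by rewrite /Sigma_q (window (fun k => gauss #|F| n k) hm).
have eS : Sigma n m = (\sum_(k < n.+1 | inM n m k) 'C(n, k))%N.
  by rewrite /Sigma (window (fun k => 'C(n, k)) hm).
have e0 : 0 <= eps by apply: ltW.
have low : (Sigma_q #|F| n m <= La_q P F n)%N.
  rewrite eSq -card_middle //; apply: leq_bigmax_cond.
  rewrite mfree andbT; apply/subsetP => A; rewrite /middle_levels_sub !inE.
  by case/andP.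
have hLan : ((La P n)%:R <= (1 + eps) * (Sigma n m)%:R :> rat).
  have := HN n Nn; rewrite ler_norml => /andP[_ h]; lra.
have Sq0 : 0 <= (Sigma_q #|F| n m)%:R :> rat by [].
have up : ((La_q P F n)%:R <= (1 + eps) * (Sigma_q #|F| n m)%:R :> rat).
  rewrite /La_q; apply: (big_ind (fun x : nat => x%:R <= (1 + eps) * (Sigma_q #|F| n m)%:R :> rat)).
  - by rewrite mulr_ge0 // addr_ge0.
  - by move=> x y hx hy; rewrite /maxn; case: ifP.
  move=> Fam /andP[sub free].
  have hw := weight sub free.
  rewrite (card_by_rank Fam) natr_sum eSq natr_sum.
  apply: (@LP_bound #|F| n m qq2 mn (fun k => #|[set A in Fam | \rank A == k]|) eps e0).
    move=> k kn; rewrite -Lv_gauss //; apply: subset_leq_card.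
    apply/subsetP => A; rewrite !inE => /andP[AF ->]; rewrite andbT.
    by have := subsetP sub A AF; rewrite inE.
  apply: le_trans hw _; apply: le_trans hLan _.
  by rewrite eS natr_sum.
have low' : (Sigma_q #|F| n m)%:R <= (La_q P F n)%:R :> rat by rewrite ler_nat.
rewrite ler_norml; apply/andP; split.
  have : 0 <= eps * (Sigma_q #|F| n m)%:R by rewrite mulr_ge0.
  lra.
lra.
Qed.
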